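(* Let $\mathcal{L}$ be a distributive abstract logic, $T\in Th_{\mathcal{L}}$ a theory and $a\in Expr_{\mathcal{L}}$ with $a\notin T$. Then there is a prime theory $P\in PTh_{\mathcal{L}}$ with $T\subseteq P$ and $a\notin P$.
   Context: An abstract logic is a triple $\mathcal{L}=(Expr_{\mathcal{L}},Th_{\mathcal{L}},\mathcal{C}_{\mathcal{L}})$ where $Expr_{\mathcal{L}}$ is a set, $Th_{\mathcal{L}}$ a non-empty set of subsets of $Expr_{\mathcal{L}}$ (theories) with $\bigcap\mathcal{T}\in Th_{\mathcal{L}}$ for every non-empty $\mathcal{T}\subseteq Th_{\mathcal{L}}$, and $\mathcal{C}_{\mathcal{L}}$ a set of operations on $Expr_{\mathcal{L}}$. $\mathcal{L}$ is closed under union of chains if the union of every non-empty chain of theories is a theory. A theory $T$ is prime if $T=\bigcap\mathcal{T}$ for a non-empty finite $\mathcal{T}\subseteq Th_{\mathcal{L}}$ implies $T\in\mathcal{T}$; totally prime if this holds for every non-empty $\mathcal{T}$ of any cardinality. $PTh_{\mathcal{L}}$, $TPTh_{\mathcal{L}}$ denote the sets of prime and totally prime theories. A distributive abstract logic is an abstract logic closed under union of chains with binary connectives $\vee,\wedge\in\mathcal{C}_{\mathcal{L}}$ such that for all $a,b$ and all $T\in TPTh_{\mathcal{L}}$: $a\vee b\in T$ iff $a\in T$ or $b\in T$; $a\wedge b\in T$ iff $a\in T$ and $b\in T$. *)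

(* Defs.v *)
From mathcomp Require Import all_boot.
From mathcomp Require Import all_classical.
Set Implicit Arguments. Unset Strict Implicit. Unset Printing Implicit Defensive.
Local Open Scope classical_set_scope.

Definition operation (E : Type) := {n : nat & ('I_n -> E) -> E}.

Definition binop (E : Type) (f : E -> E -> E) : operation E :=
  existT _ 2 (fun v : 'I_2 -> E => f (v ord0) (v ord_max)).

Definition abstract_logic (E : Type) (Th : set (set E)) (C : set (operation E)) : Prop :=
  Th !=set0 /\
  forall Ts : set (set E), Ts `<=` Th -> Ts !=set0 -> Th (\bigcap_(X in Ts) X).

Definition closed_union_chains (E : Type) (Th : set (set E)) : Prop :=
  forall Cs : set (set E), Cs `<=` Th -> Cs !=set0 ->
    (forall X Y, Cs X -> Cs Y -> X `<=` Y \/ Y `<=` X) ->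
    Th (\bigcup_(X in Cs) X).

Definition prime_theory (E : Type) (Th : set (set E)) (T : set E) : Prop :=
  Th T /\
  forall Ts : set (set E), Ts `<=` Th -> Ts !=set0 -> finite_set Ts ->
    T = \bigcap_(X in Ts) X -> Ts T.

Definition totally_prime_theory (E : Type) (Th : set (set E)) (T : set E) : Prop :=
  Th T /\
  forall Ts : set (set E), Ts `<=` Th -> Ts !=set0 ->
    T = \bigcap_(X in Ts) X -> Ts T.

Definition distributive_abstract_logic (E : Type) (Th : set (set E))
    (C : set (operation E)) (or_ and_ : E -> E -> E) : Prop :=
  [/\ abstract_logic Th C, closed_union_chains Th,
      C (binop or_), C (binop and_) &
      forall T, totally_prime_theory Th T ->
        forall a b, (T (or_ a b) <-> T a \/ T b) /\ (T (and_ a b) <-> T a /\ T b)].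

(* Main.v *)
Require Import Defs.
From mathcomp Require Import all_boot all_classical.
Local Open Scope classical_set_scope.

Theorem corollary3p3 (E : Type) (Th : set (set E)) (C : set (operation E))
    (or_ and_ : E -> E -> E) :
  distributive_abstract_logic Th C or_ and_ ->
  forall (T : set E) (a : E), Th T -> ~ T a ->
  exists P : set E, prime_theory Th P /\ T `<=` P /\ ~ P a.
Proof.
move=> [_ Hch _ _ _] T a ThT Ta.
pose Q := fun X : set E => Th X /\ T `<=` X /\ ~ X a.
pose P := fun X : set E => Q X \/ X = set0.
have [A [PA Amax]] : exists A, P A /\ forall B, A `<` B -> ~ P B.
  apply: Zorn_bigcup => F FP Ftot.
  have [[X0 FX0 QX0]|noQ] := pselect (exists2 X, F X & Q X).
  - left.
    have eqU : \bigcup_(X in F) X = \bigcup_(X in F `&` Q) X.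
      apply/seteqP; split => x [X FX Xx]; last by exists X => //; case: FX.
      exists X => //; split => //; case: (FP X FX) => // X0'.
      by subst X.
    rewrite eqU; split; [|split].
    + apply: Hch.
      * by move=> X [_ [ThX _]].
      * by exists X0.
      * by move=> X Y [FX _] [FY _]; apply: Ftot.
    + by move=> x Tx; exists X0 => //; apply QX0.
    + by move=> [X [_ [_ [_ nXa]]] Xa].
  - right; apply/seteqP; split => x // [X FX Xx].
    case: (FP X FX) => [QX|X0']; last by subst X.
    exfalso; apply: noQ; by exists X.
have QA : Q A.
  case: PA => // A0.
  have [[x Tx]|T0] := pselect (exists x, T x).
    exfalso; apply: (Amax T); last by left; split => //; split.
    rewrite A0; split => // H; by case: (H x Tx).
  have -> : A = T.
    rewrite A0; apply/seteqP; split => x //= Tx; apply: T0; by exists x.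
  by split => //; split.
case: QA => ThA [TA nAa].
exists A; split; last by [].
split => // Ts TsTh [X0 TsX0] _ eqA.
have [[X TsX nXa]|allX] := pselect (exists2 X, Ts X & ~ X a).
  have AX : A `<=` X by rewrite eqA => x Hx; apply: Hx.
  have [eqAX|neqAX] := pselect (A = X); first by rewrite eqAX.
  exfalso; apply: (Amax X); last by left; split; [apply: TsTh|split => //; apply: subset_trans AX].
  split => // XA; apply: neqAX; apply/seteqP; split => //.
exfalso; apply: nAa; rewrite eqA => X TsX.
by apply: contrapT => nXa; apply: allX; exists X.
Qed.
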